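(* Let $S=\{s_0,\dots,s_n\}$ be the vertex set of a regular simplex in $\mathbb{R}^n$. There exists $\delta>0$ such that every set $A=\{a_0,\dots,a_n\}\subset\mathbb{R}^n$ with $|a_i-s_i|<\delta$ for all $i$ is Euclidean sub-$p$-toral for every prime $p\ge 2$.
   Context: A $p$-torus is a group isomorphic to $(\mathbb{Z}_p)^\alpha$ for some $\alpha\ge1$. A set $X\subset\mathbb{R}^k$ is Euclidean sub-$p$-toral if there exist $n\ge k$, a $p$-torus $G$ and an action of $G$ on $\mathbb{R}^n$ by isometries such that $X$ (viewed in $\mathbb{R}^n$ via the standard inclusion $\mathbb{R}^k\subset\mathbb{R}^n$) is contained in a single $G$-orbit. *)

(* Defs.v *)
From HB Require Import structures.
From mathcomp Require Import all_boot all_order all_algebra.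
From mathcomp Require Import reals.
Set Implicit Arguments. Unset Strict Implicit. Unset Printing Implicit Defensive.
Import Order.TTheory GRing.Theory Num.Theory.
Local Open Scope ring_scope.

Definition enorm (R : realType) (k : nat) (v : 'rV[R]_k) : R :=
  Num.sqrt (\sum_(i < k) v 0 i ^+ 2).

Definition edist (R : realType) (k : nat) (x y : 'rV[R]_k) : R := enorm (x - y).

Definition isometry (R : realType) (k : nat) (f : 'rV[R]_k -> 'rV[R]_k) : Prop :=
  forall x y, edist (f x) (f y) = edist x y.

Definition ptorus (p alpha : nat) := {ffun 'I_alpha -> 'Z_p}.

Definition isometric_action (G : zmodType) (R : realType) (m : nat)
    (act : G -> 'rV[R]_m -> 'rV[R]_m) : Prop :=
  (forall x, act 0 x = x) /\
  (forall g h x, act (g + h) x = act g (act h x)) /\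
  (forall g, isometry (act g)).

Definition incl (R : realType) (k d : nat) (x : 'rV[R]_k) : 'rV[R]_(k + d) :=
  row_mx x 0.

Definition euclidean_sub_p_toral (R : realType) (p k : nat)
    (X : 'rV[R]_k -> Prop) : Prop :=
  exists (d alpha : nat) (act : ptorus p alpha -> 'rV[R]_(k + d) -> 'rV[R]_(k + d)),
    (1 <= alpha)%N /\ isometric_action act /\
    exists x0 : 'rV[R]_(k + d), forall x, X x -> exists g, act g x0 = incl d x.

Definition regular_simplex (R : realType) (n : nat) (s : 'I_n.+1 -> 'rV[R]_n) : Prop :=
  exists L : R, 0 < L /\ forall i j, i != j -> edist (s i) (s j) = L.

(* Main.v *)
Require Import Defs.
From HB Require Import structures.
From mathcomp Require Import all_boot all_order all_algebra.
From mathcomp Require Import reals.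
From mathcomp Require Import ring lra.
From mathcomp Require Import fingroup perm.
Import Order.TTheory GRing.Theory Num.Theory.
Local Open Scope ring_scope.
Set Implicit Arguments. Unset Strict Implicit. Unset Printing Implicit Defensive.

Section Dot.
Variable R : realType.

Definition dot k (u v : 'rV[R]_k) : R := \sum_(i < k) u 0 i * v 0 i.
Definition sqn k (u : 'rV[R]_k) := dot u u.

Lemma dotE k (u v : 'rV[R]_k) : dot u v = (u *m v^T) 0 0.
Proof. by rewrite mxE; apply: eq_bigr => i _; rewrite mxE. Qed.

Lemma dotC k (u v : 'rV[R]_k) : dot u v = dot v u.
Proof. by apply: eq_bigr => i _; rewrite mulrC. Qed.

Lemma dotDl k (u v w : 'rV[R]_k) : dot (u + v) w = dot u w + dot v w.
Proof. by rewrite /dot -big_split; apply: eq_bigr => i _; rewrite mxE mulrDl. Qed.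

Lemma dotNl k (u w : 'rV[R]_k) : dot (- u) w = - dot u w.
Proof. by rewrite /dot -sumrN; apply: eq_bigr => i _; rewrite mxE mulNr. Qed.

Lemma dotZl k a (u w : 'rV[R]_k) : dot (a *: u) w = a * dot u w.
Proof. by rewrite /dot mulr_sumr; apply: eq_bigr => i _; rewrite mxE mulrA. Qed.

Lemma dotBl k (u v w : 'rV[R]_k) : dot (u - v) w = dot u w - dot v w.
Proof. by rewrite dotDl dotNl. Qed.

Lemma dotDr k (u v w : 'rV[R]_k) : dot w (u + v) = dot w u + dot w v.
Proof. by rewrite dotC dotDl !(dotC w). Qed.

Lemma dotBr k (u v w : 'rV[R]_k) : dot w (u - v) = dot w u - dot w v.
Proof. by rewrite dotC dotBl !(dotC w). Qed.

Lemma dotZr k a (u w : 'rV[R]_k) : dot w (a *: u) = a * dot w u.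
Proof. by rewrite dotC dotZl dotC. Qed.

Lemma sqn_ge0 k (u : 'rV[R]_k) : 0 <= sqn u.
Proof. by apply: sumr_ge0 => i _; rewrite -expr2 sqr_ge0. Qed.

Lemma sqn_eq0 k (u : 'rV[R]_k) : sqn u = 0 -> u = 0.
Proof.
move=> h; apply/rowP => i; rewrite mxE.
have := @psumr_eq0P _ _ _ (fun j => u 0 j * u 0 j) (fun j _ => ltac:(by rewrite /= -expr2 sqr_ge0)) h i isT.
by move/eqP; rewrite mulf_eq0 orbb => /eqP.
Qed.

Lemma sqnD k (u v : 'rV[R]_k) : sqn (u + v) = sqn u + 2 * dot u v + sqn v.
Proof. rewrite /sqn !dotDl !dotDr (dotC v u); ring. Qed.

Lemma sqnB k (u v : 'rV[R]_k) : sqn (u - v) = sqn u - 2 * dot u v + sqn v.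
Proof. rewrite /sqn !dotBl !dotBr (dotC v u); ring. Qed.

Lemma edist_sqn k (x y : 'rV[R]_k) : edist x y = Num.sqrt (sqn (x - y)).
Proof. by rewrite /edist /enorm /sqn /dot; congr Num.sqrt; apply: eq_bigr => i _; rewrite expr2. Qed.

Lemma dot_orth k (Q : 'M[R]_k) (u v : 'rV[R]_k) :
  Q *m Q^T = 1%:M -> dot (u *m Q) (v *m Q) = dot u v.
Proof. by move=> h; rewrite !dotE trmx_mul mulmxA -(mulmxA u) h mulmx1. Qed.

Lemma dot_row_mx k1 k2 (a c : 'rV[R]_k1) (b e : 'rV[R]_k2) :
  dot (row_mx a b) (row_mx c e) = dot a c + dot b e.
Proof.
rewrite /dot big_split_ord /=; congr (_ + _); apply: eq_bigr => i _;
  by rewrite ?row_mxEl ?row_mxEr.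
Qed.

Lemma dot0l k (u : 'rV[R]_k) : dot 0 u = 0.
Proof. by rewrite /dot big1 // => i _; rewrite mxE mul0r. Qed.
Lemma dot0r k (u : 'rV[R]_k) : dot u 0 = 0.
Proof. by rewrite dotC dot0l. Qed.

End Dot.
Lemma congruence_map (R : realType) m n (U V : 'M[R]_(n, m)) :
  U *m U^T = V *m V^T -> U *m V^T = 0 -> (U *m U^T) \in unitmx ->
  exists O : 'M[R]_m, O *m O^T = 1%:M /\ O *m O = 1%:M /\ U *m O = V.
Proof.
move=> hG hUV hu.
set G := U *m U^T.
set Gi := invmx G.
set Dm := U - V.
have GT : G^T = G by rewrite /G trmx_mul trmxK.
have GiT : Gi^T = Gi by rewrite /Gi trmx_inv GT.
have VU : V *m U^T = 0 by rewrite -(trmxK V) -trmx_mul hUV trmx0.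
have DD : Dm *m Dm^T = G + G.
  by rewrite /Dm linearB /= mulmxBl !mulmxBr hUV VU -hG subr0 sub0r opprK.
set X := Dm^T *m Gi *m Dm.
have XT : X^T = X by rewrite /X !trmx_mul trmxK GiT mulmxA.
have XX : X *m X = X + X.
  have -> : X *m X = Dm^T *m Gi *m (Dm *m Dm^T) *m Gi *m Dm by rewrite /X !mulmxA.
  rewrite DD mulmxDr mulmxDl mulmxDl.
  have -> : Dm^T *m Gi *m G *m Gi *m Dm = X.
    by rewrite /X -(mulmxA _ Gi G) mulVmx // mulmx1.
  by [].
have OO : (1%:M - X) *m (1%:M - X) = 1%:M.
  rewrite mulmxBl !mulmxBr !mul1mx mulmx1 XX.
  by rewrite opprB addrK subrK.
exists (1%:M - X); split; last split.
- by rewrite linearB /= trmx1 XT.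
- exact: OO.
- rewrite mulmxBr mulmx1 /X !mulmxA.
  have -> : U *m Dm^T = G by rewrite /Dm linearB /= mulmxBr hUV subr0.
  by rewrite mulmxV // mul1mx /Dm opprB addrC subrK.
Qed.
Lemma sum_abs_prod (R : realType) n (v : 'I_n -> R) :
  \sum_j \sum_k `|v j| * `|v k| <= n%:R * \sum_j v j ^+ 2.
Proof.
have h : forall j k, `|v j| * `|v k| <= (v j ^+ 2 + v k ^+ 2) / 2.
  move=> j k; rewrite -(real_normK (num_real (v j))) -(real_normK (num_real (v k))).
  have := sqr_ge0 (`|v j| - `|v k|); rewrite sqrrB. lra.
apply: (le_trans (ler_sum _ (fun j _ => ler_sum _ (fun k _ => h j k)))).
set S := \sum_j v j ^+ 2.
have E : forall i, \sum_j (v i ^+ 2 + v j ^+ 2) / 2 = (n%:R * v i ^+ 2 + S) / 2.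
  by move=> i; rewrite -mulr_suml big_split /= sumr_const card_ord mulr_natl.
rewrite (eq_bigr _ (fun i _ => E i)) -mulr_suml big_split /= sumr_const card_ord.
rewrite -mulr_sumr -/S mulr_natl. lra.
Qed.

Lemma gram_unit (R : realType) n (G : 'M[R]_n) (c phi : R) :
  0 <= c -> 0 <= phi -> phi * n%:R < c ->
  (forall j k, `|G j k - c * (1 + (j == k)%:R)| <= phi) -> G \in unitmx.
Proof.
move=> c0 phi0 hc hG; rewrite -row_free_unit; apply: inj_row_free => v hv.
apply: sqn_eq0.
have s0 := sqn_ge0 v.
set s := sqn v in s0 *.
have q0 : \sum_k \sum_j v 0 j * G j k * v 0 k = 0.
  transitivity ((v *m G *m v^T) 0 0); last by rewrite hv mul0mx mxE.
  rewrite mxE; apply: eq_bigr => k _; rewrite !mxE mulr_suml.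
  by apply: eq_bigr => j _; rewrite ?mxE.
have t1 : forall j k, c * (1 + (j == k)%:R) * (v 0 j * v 0 k) - phi * (`|v 0 j| * `|v 0 k|)
             <= v 0 j * G j k * v 0 k.
  move=> j k.
  set E := G j k - c * (1 + (j == k)%:R).
  have hE : `|E * (v 0 j * v 0 k)| <= phi * (`|v 0 j| * `|v 0 k|).
    by rewrite normrM normrM ler_wpM2r ?mulr_ge0 ?normr_ge0 ?hG.
  have hE2 := ler_norm (- (E * (v 0 j * v 0 k))).
  rewrite normrN in hE2.
  have -> : v 0 j * G j k * v 0 k = c * (1 + (j == k)%:R) * (v 0 j * v 0 k) + E * (v 0 j * v 0 k).
    rewrite /E; ring.
  lra.
have t2 : \sum_(k < n) \sum_(j < n) (c * (1 + (j == k)%:R) * (v 0 j * v 0 k) - phi * (`|v 0 j| * `|v 0 k|))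
   <= \sum_(k < n) \sum_(j < n) v 0 j * G j k * v 0 k.
  by apply: ler_sum => k _; apply: ler_sum => j _; exact: t1.
rewrite q0 in t2.
have e1 : \sum_(k < n) \sum_(j < n) (c * (1 + (j == k)%:R) * (v 0 j * v 0 k) - phi * (`|v 0 j| * `|v 0 k|))
   = c * (\sum_k \sum_j v 0 j * v 0 k) + c * (\sum_k \sum_j (j == k)%:R * (v 0 j * v 0 k))
     - phi * \sum_k \sum_j `|v 0 j| * `|v 0 k|.
  rewrite !mulr_sumr -big_split -sumrB /=; apply: eq_bigr => k _.
  rewrite !mulr_sumr -big_split -sumrB /=; apply: eq_bigr => j _; ring.
have e2 : \sum_(k < n) \sum_(j < n) v 0 j * v 0 k = (\sum_j v 0 j) ^+ 2.
  rewrite expr2 mulr_suml; apply: eq_bigr => k _; rewrite mulr_sumr.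
  by apply: eq_bigr => j _; rewrite mulrC.
have e3 : \sum_(k < n) \sum_(j < n) (j == k)%:R * (v 0 j * v 0 k) = s.
  rewrite /s /sqn /dot; apply: eq_bigr => k _.
  rewrite (bigD1 k) //= eqxx mul1r big1 ?addr0 // => j /negbTE ->; by rewrite mul0r.
rewrite e2 e3 in e1.
rewrite e1 in t2.
have t3 : \sum_(k < n) \sum_(j < n) `|v 0 j| * `|v 0 k| <= n%:R * s.
  have h := sum_abs_prod (fun j => v 0 j); rewrite exchange_big /= in h.
  apply: (le_trans h); rewrite /s /sqn /dot le_eqVlt; apply/orP; left; apply/eqP.
  by congr (_ * _); apply: eq_bigr => i _; rewrite expr2.
have t4 : 0 <= c * (\sum_j v 0 j) ^+ 2 by rewrite mulr_ge0 ?sqr_ge0.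
have t5 : phi * (\sum_(k < n) \sum_(j < n) `|v 0 j| * `|v 0 k|) <= phi * (n%:R * s) by rewrite ler_wpM2l.
have t6 : (c - phi * n%:R) * s <= 0 by nra.
apply/eqP; rewrite eq_le s0 andbT.
by rewrite -(pmulr_rle0 _ (x := c - phi * n%:R)) // subr_gt0.
Qed.

Lemma sum_sq_indic (R : realType) (T : finType) (x y : T) (t : R) :
  \sum_r ((if r == x then t else 0) - (if r == y then t else 0)) ^+ 2 = 2 * t ^+ 2 * (x != y)%:R.
Proof.
case: (eqVneq x y) => [<-|nxy] /=.
  by rewrite mulr0 big1 // => r _; rewrite subrr expr0n.
rewrite (bigD1 x) //= (bigD1 y) /=; last by rewrite eq_sym nxy.
rewrite eqxx (negbTE nxy) eq_sym (negbTE nxy) eqxx.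
rewrite big1 ?addr0.
  by rewrite sub0r subr0 sqrrN mulr1; ring.
by move=> r /andP [/negbTE -> /negbTE ->]; rewrite subrr expr0n.
Qed.

Lemma subE (R : realType) m k (A B : 'M[R]_(m, k)) i j : (A - B) i j = A i j - B i j.
Proof. by rewrite !mxE. Qed.

Section Model.
Variable R : realType.
Variables (n p alpha : nat).
Variable w : 'I_alpha -> R.
Hypothesis w_ge0 : forall c, 0 <= w c.

Let Pt := ('I_alpha * 'Z_p)%type.
Definition dd := #|{: 'I_alpha * 'Z_p}|.

Definition shift (g : ptorus p alpha) (x : Pt) : Pt := (x.1, x.2 + g x.1).

Lemma shiftK g : cancel (shift g) (shift (- g)).
Proof. by case=> c r; rewrite /shift /= ffunE addrK. Qed.

Definition sigf (g : ptorus p alpha) (j : 'I_(n + dd)) : 'I_(n + dd) :=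
  match split j with
  | inl a => lshift dd a
  | inr b => rshift n (enum_rank (shift g (enum_val b)))
  end.

Lemma sigf_l g a : sigf g (lshift dd a) = lshift dd a.
Proof. by rewrite /sigf (unsplitK (inl _ a)). Qed.

Lemma sigf_r g b : sigf g (rshift n b) = rshift n (enum_rank (shift g (enum_val b))).
Proof. by rewrite /sigf (unsplitK (inr _ b)). Qed.

Lemma sigfK g : cancel (sigf g) (sigf (- g)).
Proof.
move=> j; case: (split_ordP j) => [a ->|b ->]; first by rewrite !sigf_l.
by rewrite !sigf_r enum_rankK shiftK enum_valK.
Qed.

Definition sig g : {perm 'I_(n + dd)} := perm (can_inj (sigfK g)).

Definition Pm g : 'M[R]_(n + dd) := perm_mx (sig g)^-1.

Lemma Pm_orth g : Pm g *m (Pm g)^T = 1%:M.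
Proof. by rewrite /Pm tr_perm_mx -perm_mxM mulgV perm_mx1. Qed.

Lemma sig0 : sig 0 = 1%g.
Proof.
apply/permP => j; rewrite permE perm1; case: (split_ordP j) => [a ->|b ->].
  by rewrite sigf_l.
by rewrite sigf_r /shift ffunE addr0 -surjective_pairing enum_valK.
Qed.

Lemma Pm0 : Pm 0 = 1%:M.
Proof. by rewrite /Pm sig0 invg1 perm_mx1. Qed.

Lemma sigD g h : sig (g + h) = (sig g * sig h)%g.
Proof.
apply/permP => j; rewrite permM !permE; case: (split_ordP j) => [a ->|b ->].
  by rewrite !sigf_l.
rewrite !sigf_r enum_rankK /shift /= !ffunE addrA.
by [].
Qed.

Lemma PmD g h : Pm (g + h) = Pm h *m Pm g.
Proof. by rewrite /Pm sigD -perm_mxM invMg. Qed.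

Lemma Pm_entry (z : 'rV[R]_(n + dd)) g j : (z *m Pm g) 0 j = z 0 (sig g j).
Proof. by rewrite /Pm -col_permE mxE. Qed.

Definition tt c := Num.sqrt (w c / 2).

Definition z0 : 'rV[R]_(n + dd) :=
  \row_j match split j with
         | inl _ => 0
         | inr b => if (enum_val b).2 == 0 then tt (enum_val b).1 else 0
         end.

Lemma z0_l a : z0 0 (lshift dd a) = 0.
Proof. by rewrite mxE (unsplitK (inl _ a)). Qed.

Lemma z0_r b : z0 0 (rshift n b) = if (enum_val b).2 == 0 then tt (enum_val b).1 else 0.
Proof. by rewrite mxE (unsplitK (inr _ b)). Qed.

Lemma dist_model g h :
  sqn (z0 *m Pm g - z0 *m Pm h) = \sum_c w c * (g c != h c)%:R.
Proof.
rewrite /sqn /dot big_split_ord /= big1 ?add0r; last first.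
  by move=> a _; rewrite subE !Pm_entry !permE !sigf_l z0_l subrr mul0r.
set H := fun x : Pt => ((if x.2 == - g x.1 then tt x.1 else 0) -
                          (if x.2 == - h x.1 then tt x.1 else 0)) ^+ 2.
transitivity (\sum_(i < dd) H (enum_val i)).
  apply: eq_bigr => b _; rewrite subE !Pm_entry !permE !sigf_r !z0_r !enum_rankK /H /shift /=.
  by rewrite !addr_eq0 expr2.
rewrite -(big_enum_val (A := predT) H).
transitivity (\sum_c \sum_r H (c, r)).
  by rewrite pair_big; apply: eq_bigr => -[c r] _.
apply: eq_bigr => c _; rewrite /H /=.
rewrite (sum_sq_indic (- g c) (- h c) (tt c)) /tt sqr_sqrtr; last first.
  by rewrite divr_ge0.
by rewrite (inj_eq oppr_inj); field.
Qed.

End Model.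

Section Cut.
Variable R : realType.

Lemma sum_neq N (F : 'I_N -> R) j : \sum_l F l * (j != l)%:R = \sum_l F l - F j.
Proof.
rewrite (bigD1 j) //= [in RHS](bigD1 j) //= eqxx mulr0 add0r.
rewrite [F j + _]addrC addrK.
by apply: eq_bigr => l; rewrite eq_sym => ->; rewrite mulr1.
Qed.

Lemma sum_or N (F : 'I_N -> R) i j : i != j ->
  \sum_l F l * ((i == l) || (j == l))%:R = F i + F j.
Proof.
move=> nij; rewrite (bigD1 i) //= (bigD1 j) /=; last by rewrite eq_sym.
rewrite eqxx (negbTE nij) eq_sym (negbTE nij) eqxx /= !mulr1 big1 ?addr0 //.
by move=> l /andP [nli nlj]; rewrite eq_sym (negbTE nli) eq_sym (negbTE nlj) mulr0.
Qed.

Lemma sum_delta N (F : 'I_N -> R) i : \sum_k (k == i)%:R * F k = F i.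
Proof.
rewrite (bigD1 i) //= eqxx mul1r big1 ?addr0 // => k /negbTE ->; by rewrite mul0r.
Qed.

Lemma cut_sum N (W : 'I_N -> 'I_N -> R) (Wsym : forall k l, W k l = W l k) i j :
  i != j ->
  \sum_k \sum_l W k l * (((i == k) || (i == l)) != ((j == k) || (j == l)))%:R
  = 2 * \sum_l W i l + 2 * \sum_l W j l - 4 * W i j - W i i - W j j.
Proof.
move=> nij.
have pt : forall k, \sum_l W k l * (((i == k) || (i == l)) != ((j == k) || (j == l)))%:R
   = (W k i + W k j) + (k == i)%:R * (\sum_l W i l - 2 * W i j - W i i)
     + (k == j)%:R * (\sum_l W j l - 2 * W j i - W j j).
  move=> k; case: (eqVneq k i) => [->|nki].
    rewrite ?eqxx eq_sym (negbTE nij) /=.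
    transitivity (\sum_l W i l * (j != l)%:R).
      by apply: eq_bigr => l _; case: (j == l).
    rewrite (sum_neq (fun l => W i l)); ring.
  case: (eqVneq k j) => [->|nkj].
    rewrite ?eqxx /=.
    transitivity (\sum_l W j l * (i != l)%:R).
      by apply: eq_bigr => l _; case: (i == l).
    rewrite (sum_neq (fun l => W j l)) (Wsym j i); ring.
  rewrite /=.
  transitivity (\sum_l W k l * ((i == l) || (j == l))%:R).
    apply: eq_bigr => l _; congr (_ * _%:R).
    case: (eqVneq i l) => [<-|]; first by rewrite (eq_sym j i) (negbTE nij).
    by case: (j == l).
  rewrite (sum_or (fun l => W k l)) //; ring.
rewrite (eq_bigr _ (fun k _ => pt k)) /= big_split /= big_split /= big_split /=.
rewrite (sum_delta (fun k => \sum_l W i l - 2 * W i j - W i i)).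
rewrite (sum_delta (fun k => \sum_l W j l - 2 * W j i - W j j)).
have -> : \sum_k W k i = \sum_l W i l by apply: eq_bigr => k _; rewrite Wsym.
have -> : \sum_k W k j = \sum_l W j l by apply: eq_bigr => k _; rewrite Wsym.
rewrite (Wsym j i); ring.
Qed.

End Cut.

Section Bounds.
Variable R : realType.

Lemma sqnZ k a (u : 'rV[R]_k) : sqn (a *: u) = a ^+ 2 * sqn u.
Proof. by rewrite /sqn dotZl dotZr mulrA expr2. Qed.

Lemma dot_bound k (u v : 'rV[R]_k) a b : 0 < a -> 0 < b ->
  2 * a * b * `|dot u v| <= a ^+ 2 * sqn u + b ^+ 2 * sqn v.
Proof.
move=> a0 b0.
have h1 := sqn_ge0 (a *: u - b *: v).
have h2 := sqn_ge0 (a *: u + b *: v).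
rewrite sqnB sqnZ sqnZ dotZl dotZr in h1.
rewrite sqnD sqnZ sqnZ dotZl dotZr in h2.
have ab : 0 < a * b by rewrite mulr_gt0.
case: (lerP 0 (dot u v)) => hd.
  rewrite ger0_norm //; nra.
rewrite ltr0_norm //; nra.
Qed.

Lemma sqn_sub_le k (x y : 'rV[R]_k) : sqn (x - y) <= 2 * sqn x + 2 * sqn y.
Proof.
have h := sqn_ge0 (x + y); rewrite sqnD in h; rewrite sqnB; lra.
Qed.

Lemma dist_perturb m (x y u v : 'rV[R]_m) (L2 e dl : R) :
  0 < L2 -> 0 < e -> sqn (u - v) = L2 -> sqn (x - u) <= dl -> sqn (y - v) <= dl ->
  dl * 8 * (e + 2 * L2) <= e ^+ 2 -> `|sqn (x - y) - L2| <= e.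
Proof.
move=> L0 e0 huv hx hy hdl.
set f := (x - u) - (y - v).
have -> : x - y = (u - v) + f by rewrite /f; apply/rowP => i; rewrite !mxE; ring.
rewrite sqnD huv.
have hf : sqn f <= 4 * dl by have := sqn_sub_le (x - u) (y - v); rewrite -/f; lra.
have hf0 := sqn_ge0 f.
have L20 : 0 < 2 * L2 by lra.
have hb := dot_bound (u - v) f e0 L20.
rewrite huv in hb.
set d := dot (u - v) f in hb *.
have hd0 : 0 <= `|d| by [].
have h1 : 2 * e * `|d| <= e ^+ 2 / 2 + 2 * L2 * sqn f.
  have : (2 * L2) * (2 * e * `|d|) <= (2 * L2) * (e ^+ 2 / 2 + 2 * L2 * sqn f).
    have -> : (2 * L2) * (e ^+ 2 / 2 + 2 * L2 * sqn f) = e ^+ 2 * L2 + (2 * L2) ^+ 2 * sqn f.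
      by field.
    nra.
  by rewrite ler_pM2l.
have h2 : sqn f * (e + 2 * L2) <= e ^+ 2 / 2 by nra.
have h3 : e * (2 * `|d| + sqn f) <= e * e by nra.
have h4 : 2 * `|d| + sqn f <= e by rewrite -(ler_pM2l e0).
have h5 : `|2 * d + sqn f| <= 2 * `|d| + sqn f.
  by apply: (le_trans (ler_normD _ _)); rewrite normrM normr_nat (ger0_norm hf0).
have -> : L2 + 2 * d + sqn f - L2 = 2 * d + sqn f by ring.
exact: le_trans h5 h4.
Qed.

End Bounds.

Section Gram.
Variable R : realType.

Definition Mx m N (x : 'I_N.+1 -> 'rV[R]_m) : 'M[R]_(N, m) :=
  \matrix_(k, j) (x (lift ord0 k) - x ord0) 0 j.

Lemma Mx_row m N (x : 'I_N.+1 -> 'rV[R]_m) k : row k (Mx x) = x (lift ord0 k) - x ord0.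
Proof. by apply/rowP => j; rewrite !mxE. Qed.

Lemma Mx_entry m N (x y : 'I_N.+1 -> 'rV[R]_m) k l :
  (Mx x *m (Mx y)^T) k l = dot (x (lift ord0 k) - x ord0) (y (lift ord0 l) - y ord0).
Proof. by rewrite mxE; apply: eq_bigr => j _; rewrite !mxE. Qed.

Lemma polar m (p q r : 'rV[R]_m) :
  dot (p - r) (q - r) = (sqn (p - r) + sqn (q - r) - sqn (p - q)) / 2.
Proof.
have -> : p - q = (p - r) - (q - r) by rewrite opprB addrA subrK.
by rewrite (sqnB (p - r) (q - r)); field.
Qed.

Lemma gram_eq m N (x y : 'I_N.+1 -> 'rV[R]_m) :
  (forall i j, sqn (x i - x j) = sqn (y i - y j)) ->
  Mx x *m (Mx x)^T = Mx y *m (Mx y)^T.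
Proof.
by move=> h; apply/matrixP => k l; rewrite !Mx_entry !polar !h.
Qed.

End Gram.

Lemma sum_enum_val (R : realType) (T : finType) (F : T -> R) :
  \sum_(c < #|{: T}|) F (enum_val c) = \sum_x F x.
Proof.
rewrite [RHS](reindex (@enum_val T predT)) //=.
exact: (onW_bij _ (enum_val_bij T)).
Qed.

Section Points.
Variable R : realType.
Variables (n p : nat).
Variable W : 'I_n.+1 -> 'I_n.+1 -> R.
Hypothesis Wsym : forall k l, W k l = W l k.
Hypothesis W0 : forall k l, 0 <= W k l.

Definition alphaN := #|{: 'I_n.+1 * 'I_n.+1}|.
Definition wW (c : 'I_alphaN) : R := W (enum_val c).1 (enum_val c).2.
Definition gpt (i : 'I_n.+1) : ptorus p alphaN :=
  [ffun c => ((i == (enum_val c).1) || (i == (enum_val c).2))%:R].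

Lemma wW_ge0 c : 0 <= wW c.
Proof. exact: W0. Qed.

Lemma natZp_neq (b1 b2 : bool) : ((b1%:R : 'Z_p) != b2%:R) = (b1 != b2).
Proof.
by case: b1; case: b2 => //=; rewrite ?oner_eq0 // eq_sym oner_eq0.
Qed.

Lemma model_dist i j : i != j ->
  sqn (z0 n p wW *m Pm R n (gpt i) - z0 n p wW *m Pm R n (gpt j)) =
  2 * \sum_l W i l + 2 * \sum_l W j l - 4 * W i j - W i i - W j j.
Proof.
move=> nij; rewrite (dist_model n wW_ge0).
pose F := fun x : 'I_n.+1 * 'I_n.+1 => W x.1 x.2 *
       (((i == x.1) || (i == x.2)) != ((j == x.1) || (j == x.2)))%:R.
transitivity (\sum_(c < #|{: 'I_n.+1 * 'I_n.+1}|) F (enum_val c)).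
  by apply: eq_bigr => c _; rewrite !ffunE natZp_neq.
rewrite (sum_enum_val F).
rewrite -(cut_sum Wsym nij) pair_big /=.
by apply: eq_bigr => -[k l].
Qed.

End Points.

Lemma sqnN (R : realType) k (u : 'rV[R]_k) : sqn (- u) = sqn u.
Proof. by rewrite /sqn dotNl dotC dotNl opprK. Qed.

Lemma sqn0 (R : realType) k : sqn (0 : 'rV[R]_k) = 0.
Proof. by rewrite /sqn dot0l. Qed.

Lemma incl_sub (R : realType) k d (x y : 'rV[R]_k) : incl d x - incl d y = incl d (x - y).
Proof. by rewrite /incl opp_row_mx add_row_mx subr0. Qed.

Lemma sqn_incl (R : realType) k d (x : 'rV[R]_k) : sqn (incl d x) = sqn x.
Proof. by rewrite /sqn /incl dot_row_mx dot0l addr0. Qed.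

Lemma zl (R : realType) n p alpha (w : 'I_alpha -> R) g a :
  (z0 n p w *m Pm R n g) 0 (lshift (dd p alpha) a) = 0.
Proof. by rewrite Pm_entry permE sigf_l z0_l. Qed.

Lemma cross (R : realType) k d (x : 'rV[R]_(k + d)) (b : 'rV[R]_k) :
  (forall a, x 0 (lshift d a) = 0) -> dot x (incl d b) = 0.
Proof.
move=> hx; rewrite /dot big_split_ord /= !big1 ?addr0 //.
  by move=> i _; rewrite /incl row_mxEr mxE mulr0.
by move=> i _; rewrite hx mul0r.
Qed.

Lemma orth_mul (R : realType) k (A B : 'M[R]_k) :
  A *m A^T = 1%:M -> B *m B^T = 1%:M -> (A *m B) *m (A *m B)^T = 1%:M.
Proof.
by move=> hA hB; rewrite trmx_mul mulmxA -(mulmxA A B) hB mulmx1 hA.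
Qed.

Lemma addrKr2 (V : zmodType) (a b c : V) : (a + c) - (b + c) = a - b.
Proof. by rewrite opprD addrACA subrr addr0. Qed.

Lemma zmod_aux (V : zmodType) (a b d : V) : (a - b) + d + (b - d) = a.
Proof. by rewrite addrACA subrK subrr addr0. Qed.

Unset Implicit Arguments.
Set Strict Implicit.

Theorem lemma7 (R : realType) (n : nat) (s : 'I_n.+1 -> 'rV[R]_n) :
  regular_simplex s ->
  exists delta : R, 0 < delta /\
    forall a : 'I_n.+1 -> 'rV[R]_n,
      (forall i, edist (a i) (s i) < delta) ->
      forall p : nat, prime p ->
        euclidean_sub_p_toral p (fun x => exists i, x = a i).
Proof.
case=> L [L0 hL].
pose L2 := L ^+ 2.
have L20 : 0 < L2 by rewrite exprn_gt0.
have n0 : 0 <= n%:R :> R by [].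
pose e := L2 / (4 * (n%:R + 1)).
have e0 : 0 < e by rewrite divr_gt0 // mulr_gt0 // ltr_wpDl.
have ee : e * (4 * (n%:R + 1)) = L2 by rewrite /e mulfVK // mulf_neq0 // gt_eqF // ltr_wpDl.
have ne : n%:R * e <= L2 / 4 by nra.
pose dl := e ^+ 2 / (8 * (e + 2 * L2)).
have dl0 : 0 < dl by rewrite divr_gt0 ?exprn_gt0 // mulr_gt0 //; lra.
have hdl : dl * 8 * (e + 2 * L2) <= e ^+ 2.
  rewrite /dl -mulrA mulfVK //; apply: lt0r_neq0; rewrite mulr_gt0 //; lra.
exists (Num.sqrt dl); split; first by rewrite sqrtr_gt0.
move=> a ha p _.
pose D i j := sqn (a i - a j).
have hs : forall i j, i != j -> sqn (s i - s j) = L2.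
  move=> i j nij; have := hL i j nij; rewrite edist_sqn => h.
  by rewrite -(sqr_sqrtr (sqn_ge0 (s i - s j))) h.
have ha' : forall i, sqn (a i - s i) <= dl.
  by move=> i; have := ha i; rewrite edist_sqn ltr_sqrt // => /ltW.
have hD : forall i j, i != j -> `|D i j - L2| <= e.
  by move=> i j nij; exact: (dist_perturb L20 e0 (hs i j nij) (ha' i) (ha' j) hdl).
have Dsym : forall i j, D i j = D j i by move=> i j; rewrite /D -opprB sqnN.
have Dii : forall i, D i i = 0 by move=> i; rewrite /D subrr sqn0.
pose cc := L2 / 4 + e / 4.
pose ds k := \sum_l D k l.
pose X k := ds k / 2 + (3 - 2 * (n%:R + 1)) * cc.
pose W k l := cc - D k l / 4 + (k == l)%:R * X k.
have Wsym : forall k l, W k l = W l k.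
  by move=> k l; rewrite /W Dsym; case: (eqVneq k l) => [->|nkl]; rewrite ?mul0r.
have hL2 : forall i j, i != j -> L2 - e <= D i j <= L2 + e.
  move=> i j nij; have := hD i j nij; rewrite ler_norml => /andP [h1 h2].
  by apply/andP; split; lra.
have dsb : forall k, n%:R * (L2 - e) <= ds k.
  move=> k; have : \sum_l (fun _ => L2 - e) l * (k != l)%:R <= ds k.
    apply: ler_sum => l _; case: (eqVneq k l) => [<-|nkl]; first by rewrite mulr0 Dii.
    by rewrite mulr1; case/andP: (hL2 _ _ nkl).
  by rewrite sum_neq sumr_const card_ord mulrSr addrK mulr_natl.
have W0 : forall k l, 0 <= W k l.
  move=> k l; rewrite /W; case: (eqVneq k l) => [<-|nkl].
    rewrite Dii /X /cc mul1r; have := dsb k; lra.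
  rewrite mul0r addr0; case/andP: (hL2 _ _ nkl) => _ h; rewrite /cc; lra.
pose z i := z0 n p (wW W) *m Pm R n (@gpt n p i).
have rs : forall i, \sum_l W i l = (n%:R + 1) * cc - ds i / 4 + X i.
  move=> i; rewrite /W big_split /= sumrB sumr_const card_ord -mulr_suml.
  have -> : \sum_l (i == l)%:R * X i = X i.
    by rewrite (bigD1 i) //= eqxx mul1r big1 ?addr0 // => l /negbTE; rewrite eq_sym => ->; rewrite mul0r.
  by rewrite mulrSr -(mulr_natl cc n) mulrDl mul1r.
have hz : forall i j, sqn (z i - z j) = D i j.
  move=> i j; case: (eqVneq i j) => [<-|nij]; first by rewrite subrr sqn0 Dii.
  by rewrite /z (model_dist p Wsym W0 nij) !rs /W !eqxx (negbTE nij) !Dii /X; rewrite /= ?mulr0n ?mulr1n; field.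
pose y := fun i => incl (dd p (alphaN n)) (a i).
have hzy : forall i j, sqn (z i - z j) = sqn (y i - y j).
  by move=> i j; rewrite hz /y incl_sub sqn_incl.
have UU := gram_eq hzy.
have UV : Mx z *m (Mx y)^T = 0.
  apply/matrixP => k l; rewrite Mx_entry mxE /y incl_sub; apply: cross => b.
  by rewrite /z subE !zl subrr.
have l0 : forall j : 'I_n, lift ord0 j != ord0 by move=> j; rewrite eq_sym neq_lift.
have Uu : Mx z *m (Mx z)^T \in unitmx.
  rewrite UU; apply: (@gram_unit _ _ _ (L2 / 2) (3 * e / 2)); [lra | lra | nra | ].
  move=> j k; rewrite Mx_entry polar /y !incl_sub !sqn_incl -/(D _ _) -/(D _ _) -/(D _ _).
  case: (eqVneq j k) => [<-|njk].
    rewrite Dii /= mulr1n; have := hD _ _ (l0 j); rewrite !ler_norml => /andP [h1 h2].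
    apply/andP; split; [have := h1 | have := h2]; lra.
  have njk' : lift ord0 j != lift ord0 k by rewrite (inj_eq lift_inj).
  case/andP: (hL2 _ _ (l0 j)) => h1 h2.
  case/andP: (hL2 _ _ (l0 k)) => h3 h4.
  case/andP: (hL2 _ _ njk') => h5 h6.
  rewrite /= mulr0n addr0 mulr1 ler_norml; apply/andP; split; lra.
have [O [OO1 [OO2 UO]]] := congruence_map UU UV Uu.
pose c := y ord0 - z ord0 *m O.
pose act := fun (g : ptorus p (alphaN n)) (x : 'rV[R]_(n + dd p (alphaN n))) =>
  (x - c) *m (O *m Pm R n g *m O) + c.
exists (dd p (alphaN n)), (alphaN n), act; split.
  by rewrite /alphaN card_prod card_ord muln_gt0.
split.
  split; [|split].
  - move=> x; rewrite /act Pm0 mulmx1 OO2 mulmx1 subrK //.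
  - move=> g h x; rewrite /act addrK; congr (_ + c); rewrite -(mulmxA (x - c)); congr (_ *m _).
    by rewrite PmD !mulmxA -(mulmxA (O *m Pm R n h) O O) OO2 mulmx1.
  - move=> g x x'; rewrite !edist_sqn /act addrKr2 -mulmxBl.
    have -> : x - c - (x' - c) = x - x' by rewrite addrKr2.
    congr Num.sqrt; rewrite /sqn dot_orth //.
    by apply: orth_mul; [apply: orth_mul; [|apply: Pm_orth] |].
exists (z0 n p (wW W) *m O + c) => x [i ->].
exists (@gpt n p i); rewrite /act addrK !mulmxA -(mulmxA _ O O) OO2 mulmx1 -/(z i).
case: (unliftP ord0 i) => [k ->|->]; last by rewrite /c addrC subrK.
have -> : z (lift ord0 k) = (z (lift ord0 k) - z ord0) + z ord0 by rewrite subrK.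
rewrite mulmxDl -(Mx_row z k) -row_mul UO Mx_row /c.
exact: zmod_aux.
Qed.
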